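(* Let $K$ be a kite (built from a triangle with angles $\alpha,\beta$ adjacent to a side of length $1$) in standard position, and let $K_1=K,K_2,\dots,K_n$ be a kite unfolding sequence given by a combinatorics of length $n$ (i.e. $n-1$ rotations). Let $(x^{\alpha}_n,y^{\alpha}_n)$ and $(x^{\beta}_n,y^{\beta}_n)$ be the coordinates of the $\alpha$-vertex and $\beta$-vertex of $K_n$, and $(x_n,y_n)$ the coordinates of either of the two side vertices of $K_n$. Then: (1) $x^{\alpha}_n,y^{\alpha}_n,x^{\beta}_n,y^{\beta}_n$ are trigonometric polynomials in $\alpha,\beta$ with integer coefficients, depending only on the combinatorics, of degree at most $2n-2$; (2) $x_n=P(\alpha,\beta)+\frac{\sin\beta}{\sin(\alpha+\beta)}\cos(m\alpha+l\beta)$ and $y_n=Q(\alpha,\beta)+\frac{\sin\beta}{\sin(\alpha+\beta)}\sin(m\alpha+l\beta)$, where $P,Q$ are trigonometric polynomials with integer coefficients of degree at most $2n-2$ and $m,l$ are integers with $|m|+|l|\le 2n-1$.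
   Context: Let $T$ be a triangle with a side $AB$ of length $1$ whose adjacent angles are $\alpha$ (at $A$) and $\beta$ (at $B$). The kite $K$ is the union of $T$ and its reflection across $AB$; it has an $\alpha$-vertex $A$ (with angle $2\alpha$), a $\beta$-vertex $B$ (with angle $2\beta$), and two side vertices. The kite diagonal is the vector from the $\alpha$-vertex to the $\beta$-vertex, and the kite angle is the counterclockwise angle from the $x$-axis to the kite diagonal. $K$ is in standard position if its $\alpha$-vertex is at the origin and its $\beta$-vertex at $(1,0)$. A kite unfolding step replaces a kite by its image under rotation about its $\alpha$-vertex by $\pm2\alpha$ or about its $\beta$-vertex by $\pm2\beta$ (this corresponds to unfolding the triangle billiard along an orbit). A combinatorics of length $n$ is a sequence of $n-1$ such choices (angles $\pm2\alpha$ or $\pm2\beta$), producing kites $K_1=K,\dots,K_n$. A trigonometric polynomial in $\alpha,\beta$ with integer coefficients of degree at most $d$ is an integer linear combination of $\cos(a\alpha+b\beta)$ and $\sin(a\alpha+b\beta)$ with integers $|a|+|b|\le d$. *)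

(* Defs.v *)
From Stdlib Require Import Reals ZArith List.
Open Scope R_scope.

Definition point := (R * R)%type.

Definition rot (c : point) (phi : R) (p : point) : point :=
  (fst c + cos phi * (fst p - fst c) - sin phi * (snd p - snd c),
   snd c + sin phi * (fst p - fst c) + cos phi * (snd p - snd c)).

Record kite := Kite {
  avert : point;
  bvert : point;
  side1 : point;
  side2 : point
}.

(** The kite in standard position for the triangle with side AB = 1 and
    adjacent angles alpha (at A) and beta (at B): A = (0,0), B = (1,0),
    third vertex C at distance sin beta / sin(alpha+beta) from A (law of
    sines) in direction alpha, and its reflection across AB. *)
Definition std_kite (alpha beta : R) : kite :=
  let r := sin beta / sin (alpha + beta) in
  Kite (0, 0) (1, 0) (r * cos alpha, r * sin alpha) (r * cos alpha, - (r * sin alpha)).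

Definition kite_map (f : point -> point) (k : kite) : kite :=
  Kite (f (avert k)) (f (bvert k)) (f (side1 k)) (f (side2 k)).

Inductive vchoice := Valpha | Vbeta.
Definition kstep := (vchoice * bool)%type.

Definition sgn (b : bool) : R := if b then 1 else -1.

Definition kite_step (alpha beta : R) (k : kite) (s : kstep) : kite :=
  match s with
  | (Valpha, b) => kite_map (rot (avert k) (sgn b * (2 * alpha))) k
  | (Vbeta, b)  => kite_map (rot (bvert k) (sgn b * (2 * beta))) k
  end.

(** A combinatorics of length n is a list of n-1 steps; [last_kite] is K_n
    (K_1 = the standard kite). *)
Definition last_kite (alpha beta : R) (c : list kstep) : kite :=
  fold_left (kite_step alpha beta) c (std_kite alpha beta).

(** Formal trigonometric polynomials in alpha, beta with integer coefficients:
    a list of terms (a, b, p, q) standing for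
    p cos(a alpha + b beta) + q sin(a alpha + b beta). *)
Definition trigpoly := list (Z * Z * Z * Z).

Definition term_eval (alpha beta : R) (t : Z * Z * Z * Z) : R :=
  let '(a, b, p, q) := t in
  IZR p * cos (IZR a * alpha + IZR b * beta) + IZR q * sin (IZR a * alpha + IZR b * beta).

Definition teval (P : trigpoly) (alpha beta : R) : R :=
  fold_right (fun t acc => term_eval alpha beta t + acc) 0 P.

Definition tdeg_le (P : trigpoly) (d : Z) : Prop :=
  Forall (fun t => let '(a, b, _, _) := t in (Z.abs a + Z.abs b <= d)%Z) P.

Definition valid_angles (alpha beta : R) : Prop :=
  0 < alpha /\ 0 < beta /\ alpha + beta < PI.

Definition side_vert (sel : bool) (k : kite) : point :=
  if sel then side1 k else side2 k.

(* Main.v *)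
Require Import Defs.
From Stdlib Require Import Reals ZArith List Lra Lia.
Open Scope R_scope.

Definition INV (al be : R) (k : kite) (Pxa Pya : trigpoly) (a b : Z) : Prop :=
  let th := IZR a * al + IZR b * be in
  let r := sin be / sin (al + be) in
  let x := teval Pxa al be in let y := teval Pya al be in
  avert k = (x, y) /\ bvert k = (x + 1 * cos th, y + 1 * sin th) /\
  side1 k = (x + r * cos (th + al), y + r * sin (th + al)) /\
  side2 k = (x + r * cos (th - al), y + r * sin (th - al)).

Lemma L1 x y ph : rot (x, y) ph (x, y) = (x, y).
Proof. unfold rot; simpl; f_equal; ring. Qed.

Lemma L2 x y ph r t t' : t' = t + ph ->
  rot (x, y) ph (x + r * cos t, y + r * sin t) = (x + r * cos t', y + r * sin t').
Proof. intros ->; unfold rot; simpl; rewrite cos_plus, sin_plus; f_equal; ring. Qed.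

Lemma L3 x y ph t t' : t' = t + ph ->
  rot (x + 1 * cos t, y + 1 * sin t) ph (x, y) =
  (x + 1 * cos t + -1 * cos t', y + 1 * sin t + -1 * sin t').
Proof. intros ->; unfold rot; simpl; rewrite cos_plus, sin_plus; f_equal; ring. Qed.

Lemma L5 x y ph r t t' s s' : t' = t + ph -> s' = s + ph ->
  rot (x + 1 * cos t, y + 1 * sin t) ph (x + r * cos s, y + r * sin s) =
  (x + 1 * cos t + -1 * cos t' + r * cos s', y + 1 * sin t + -1 * sin t' + r * sin s').
Proof.
  intros -> ->; unfold rot; simpl; rewrite !cos_plus, !sin_plus; f_equal; ring.
Qed.

Lemma teval_app P Q al be : teval (P ++ Q) al be = teval P al be + teval Q al be.
Proof. induction P as [|t P IH]; simpl; [ring|]. unfold teval in *; simpl. rewrite IH; ring. Qed.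

Lemma teval2 a b d al be :
  teval ((a, b, 1%Z, 0%Z) :: (a, (b + d)%Z, (-1)%Z, 0%Z) :: nil) al be =
  1 * cos (IZR a * al + IZR b * be) + -1 * cos (IZR a * al + IZR (b + d) * be).
Proof. unfold teval; simpl. ring. Qed.

Lemma teval2s a b d al be :
  teval ((a, b, 0%Z, 1%Z) :: (a, (b + d)%Z, 0%Z, (-1)%Z) :: nil) al be =
  1 * sin (IZR a * al + IZR b * be) + -1 * sin (IZR a * al + IZR (b + d) * be).
Proof. unfold teval; simpl. ring. Qed.

Lemma dzE (sg : bool) : IZR (if sg then 2 else -2)%Z = sgn sg * 2.
Proof. destruct sg; simpl; lra. Qed.

Lemma tdeg_mono P d d' : (d <= d')%Z -> tdeg_le P d -> tdeg_le P d'.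
Proof.
  intros Hd H; unfold tdeg_le in *; eapply Forall_impl; [|exact H].
  intros [[[a b] p] q]; lia.
Qed.

Lemma inv (c : list kstep) : exists Pxa Pya a b,
  tdeg_le Pxa (2 * Z.of_nat (length c)) /\ tdeg_le Pya (2 * Z.of_nat (length c)) /\
  (Z.abs a + Z.abs b <= 2 * Z.of_nat (length c))%Z /\
  forall al be, INV al be (last_kite al be c) Pxa Pya a b.
Proof.
  induction c as [|s c IH] using rev_ind.
  - exists nil, nil, 0%Z, 0%Z. split; [constructor|]. split; [constructor|].
    split; [simpl; lia|].
    intros al be; unfold INV, last_kite, std_kite; simpl.
    replace (0 * al + 0 * be) with 0 by ring.
    rewrite !Rplus_0_l, !Rminus_0_l, cos_neg, sin_neg, cos_0, sin_0.
    repeat split; f_equal; ring.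
  - destruct IH as (Pxa & Pya & a & b & Hx & Hy & Hab & H).
    rewrite app_length; simpl length.
    replace (Z.of_nat (length c + 1)) with (Z.of_nat (length c) + 1)%Z by lia.
    destruct s as [[|] sg].
    + exists Pxa, Pya, (a + (if sg then 2 else -2))%Z, b.
      split; [eapply tdeg_mono; [|exact Hx]; lia|].
      split; [eapply tdeg_mono; [|exact Hy]; lia|].
      split; [destruct sg; lia|].
      intros al be. specialize (H al be).
      unfold last_kite in *; rewrite fold_left_app; simpl fold_left.
      destruct (fold_left (kite_step al be) c (std_kite al be)) as [A B S1 S2].
      unfold INV in *; simpl in *. destruct H as (-> & -> & -> & ->).
      assert (E : IZR (a + (if sg then 2 else -2)) * al + IZR b * be =
                  IZR a * al + IZR b * be + sgn sg * (2 * al))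
        by (rewrite plus_IZR, dzE; ring).
      rewrite L1. repeat split; apply L2; rewrite E; ring.
    + exists (Pxa ++ (a, b, 1%Z, 0%Z) :: (a, (b + (if sg then 2 else -2))%Z, (-1)%Z, 0%Z) :: nil).
      exists (Pya ++ (a, b, 0%Z, 1%Z) :: (a, (b + (if sg then 2 else -2))%Z, 0%Z, (-1)%Z) :: nil).
      exists a, (b + (if sg then 2 else -2))%Z.
      split.
      { unfold tdeg_le in *; apply Forall_app; split.
        - eapply Forall_impl; [|exact Hx]; intros [[[? ?] ?] ?]; lia.
        - repeat constructor; destruct sg; lia. }
      split.
      { unfold tdeg_le in *; apply Forall_app; split.
        - eapply Forall_impl; [|exact Hy]; intros [[[? ?] ?] ?]; lia.
        - repeat constructor; destruct sg; lia. }
      split; [destruct sg; lia|].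
      intros al be. specialize (H al be).
      unfold last_kite in *; rewrite fold_left_app; simpl fold_left.
      destruct (fold_left (kite_step al be) c (std_kite al be)) as [A B S1 S2].
      unfold INV in *; simpl in *. destruct H as (-> & -> & -> & ->).
      rewrite !teval_app, teval2, teval2s.
      assert (E : IZR a * al + IZR (b + (if sg then 2 else -2)) * be =
                  IZR a * al + IZR b * be + sgn sg * (2 * be))
        by (rewrite plus_IZR, dzE; ring).
      rewrite E.
      split; [erewrite L3 by reflexivity; f_equal; ring|].
      split; [rewrite L1; f_equal; ring|].
      set (th := IZR a * al + IZR b * be). set (ph := sgn sg * (2 * be)).
      split; [rewrite (L5 _ _ _ _ _ (th+ph) _ (th+ph+al)) by (unfold th, ph; ring)
             |rewrite (L5 _ _ _ _ _ (th+ph) _ (th+ph-al)) by (unfold th, ph; ring)];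
        f_equal; ring.
Qed.

Theorem lemma3p1 (c : list kstep) :
  let n := (Z.of_nat (length c) + 1)%Z in
  (exists Pxa Pya Pxb Pyb : trigpoly,
      tdeg_le Pxa (2 * n - 2) /\ tdeg_le Pya (2 * n - 2) /\
      tdeg_le Pxb (2 * n - 2) /\ tdeg_le Pyb (2 * n - 2) /\
      forall alpha beta : R, valid_angles alpha beta ->
        fst (avert (last_kite alpha beta c)) = teval Pxa alpha beta /\
        snd (avert (last_kite alpha beta c)) = teval Pya alpha beta /\
        fst (bvert (last_kite alpha beta c)) = teval Pxb alpha beta /\
        snd (bvert (last_kite alpha beta c)) = teval Pyb alpha beta) /\
  (forall sel : bool,
    exists (P Q : trigpoly) (m l : Z),
      tdeg_le P (2 * n - 2) /\ tdeg_le Q (2 * n - 2) /\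
      (Z.abs m + Z.abs l <= 2 * n - 1)%Z /\
      forall alpha beta : R, valid_angles alpha beta ->
        fst (side_vert sel (last_kite alpha beta c)) =
          teval P alpha beta + sin beta / sin (alpha + beta) * cos (IZR m * alpha + IZR l * beta) /\
        snd (side_vert sel (last_kite alpha beta c)) =
          teval Q alpha beta + sin beta / sin (alpha + beta) * sin (IZR m * alpha + IZR l * beta)).
Proof.
  intros n.
  destruct (inv c) as (Pxa & Pya & a & b & Hx & Hy & Hab & H).
  assert (Hn : (2 * n - 2 = 2 * Z.of_nat (length c))%Z) by (unfold n; lia).
  rewrite Hn. split.
  - exists Pxa, Pya, (Pxa ++ (a, b, 1%Z, 0%Z) :: nil), (Pya ++ (a, b, 0%Z, 1%Z) :: nil).
    split; [exact Hx|]. split; [exact Hy|].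
    split; [unfold tdeg_le in *; apply Forall_app; split; [exact Hx| repeat constructor; lia]|].
    split; [unfold tdeg_le in *; apply Forall_app; split; [exact Hy| repeat constructor; lia]|].
    intros al be _. specialize (H al be). unfold INV in H.
    destruct H as (HA & HB & _ & _). rewrite HA, HB, !teval_app. simpl.
    unfold teval at 2 4; simpl. repeat split; ring.
  - intros sel. exists Pxa, Pya, (a + if sel then 1 else -1)%Z, b.
    split; [exact Hx|]. split; [exact Hy|].
    split; [unfold n; destruct sel; lia|].
    intros al be _. specialize (H al be). unfold INV in H.
    destruct H as (_ & _ & H1 & H2).
    assert (E : IZR (a + if sel then 1 else -1) * al + IZR b * be =
                if sel then IZR a * al + IZR b * be + al else IZR a * al + IZR b * be - al)
      by (destruct sel; rewrite plus_IZR; simpl; ring).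
    rewrite E. destruct sel; simpl; [rewrite H1|rewrite H2]; simpl; split; reflexivity.
Qed.
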